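(* Let $R\in\mathbb{R}^{n\times m}$ be a matrix such that $\mathcal{K}_{\mathcal{R}}(R)=\{Rp: p\in\mathbb{R}^m,\ p\ge 0\}$ is a proper cone. Let $\mathcal{X}\subseteq\mathbb{R}^n$ and let $f:\mathcal{X}\to\mathbb{R}^n$ be differentiable with Jacobian $\partial f(x)$. Suppose that for every $x\in\mathcal{X}$ there exist $\alpha\in\mathbb{R}$ and a matrix $P\in\mathbb{R}^{m\times m}$ with all entries strictly positive such that $$(\alpha I+\partial f(x))R=RP.$$ Then the system $\dot x=f(x)$ is strictly K-cooperative with respect to $\mathcal{K}_{\mathcal{R}}(R)$.
   Context: Inequalities between vectors/matrices are entrywise; $P>0$ means every entry of $P$ is strictly positive. A proper cone is a set $\mathcal{K}\subseteq\mathbb{R}^n$ such that: (i) if $r_1,r_2\in\mathcal{K}$ and $p_1,p_2\ge 0$ are real, then $p_1r_1+p_2r_2\in\mathcal{K}$; (ii) $\mathcal{K}$ has nonempty interior; (iii) if $r\in\mathcal{K}\setminus\{0\}$ then $-r\notin\mathcal{K}$. The dual cone is $\mathcal{K}^*=\{h:\langle h,r\rangle\ge 0\ \forall r\in\mathcal{K}\}$. Strict K-cooperativity: for a proper cone $\mathcal{K}$ and differentiable $f:\mathcal{X}\to\mathbb{R}^n$, the system $\dot x=f(x)$ is strictly K-cooperative with respect to $\mathcal{K}$ if for all $x\in\mathcal{X}$, all $\delta x\in\mathcal{K}\setminus\{0\}$ and all $h\in\mathcal{K}^*\setminus\{0\}$, $\langle h,\delta x\rangle=0$ implies $\langle h,\partial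 f(x)\,\delta x\rangle>0$. *)

(* Defs.v *)
(* vectors in R^n are column vectors 'cV[R]_n over an
   arbitrary real field R (the paper's R = the reals is an instance). *)
From HB Require Import structures.
From mathcomp Require Import all_boot all_order all_algebra.
Set Implicit Arguments. Unset Strict Implicit. Unset Printing Implicit Defensive.
Import Order.TTheory GRing.Theory Num.Theory.
Local Open Scope ring_scope.

Definition dotv (R : realFieldType) (n : nat) (h r : 'cV[R]_n) : R :=
  \sum_(i < n) h i 0 * r i 0.

Definition maxnorm (R : realFieldType) (n : nat) (v : 'cV[R]_n) : R :=
  \big[Num.max/0]_(i < n) `|v i 0|.

Definition proper_cone (R : realFieldType) (n : nat) (K : 'cV[R]_n -> Prop) : Prop :=
  [/\ (forall r1 r2 (p1 p2 : R), K r1 -> K r2 -> 0 <= p1 -> 0 <= p2 ->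
         K (p1 *: r1 + p2 *: r2)),
      (exists r, exists2 eps : R, 0 < eps &
         forall y, maxnorm (y - r) < eps -> K y)
    & (forall r, K r -> r != 0 -> ~ K (- r))].

Definition dual_cone (R : realFieldType) (n : nat) (K : 'cV[R]_n -> Prop)
  (h : 'cV[R]_n) : Prop :=
  forall r, K r -> 0 <= dotv h r.

Definition cone_of (R : realFieldType) (n m : nat) (Rm : 'M[R]_(n, m))
  (r : 'cV[R]_n) : Prop :=
  exists2 p : 'cV[R]_m, (forall i, 0 <= p i 0) & r = Rm *m p.

Definition is_jacobian (R : realFieldType) (n : nat) (X : 'cV[R]_n -> Prop)
  (f : 'cV[R]_n -> 'cV[R]_n) (J : 'cV[R]_n -> 'M[R]_n) : Prop :=
  forall x, X x -> forall eps : R, 0 < eps -> exists2 d : R, 0 < d &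
    forall y, X y -> maxnorm (y - x) < d ->
      maxnorm (f y - f x - J x *m (y - x)) <= eps * maxnorm (y - x).

Definition strictly_K_cooperative (R : realFieldType) (n : nat)
  (K : 'cV[R]_n -> Prop) (X : 'cV[R]_n -> Prop) (J : 'cV[R]_n -> 'M[R]_n) : Prop :=
  forall x, X x -> forall dx h, K dx -> dx != 0 -> dual_cone K h -> h != 0 ->
    dotv h dx = 0 -> 0 < dotv h (J x *m dx).

(* Main.v *)
Require Import Defs.
From HB Require Import structures.
From mathcomp Require Import all_boot all_order all_algebra.
From mathcomp Require Import lra.
Import Order.TTheory GRing.Theory Num.Theory.
Local Open Scope ring_scope.

Lemma dotE (R : realFieldType) n (h v : 'cV[R]_n) : dotv h v = (h^T *m v) 0 0.
Proof. rewrite /dotv !mxE; apply: eq_bigr => i _; by rewrite mxE. Qed.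

Lemma dotRm (R : realFieldType) n m (Rm : 'M[R]_(n, m)) h p :
  dotv h (Rm *m p) = dotv (Rm^T *m h) p.
Proof. by rewrite !dotE trmx_mul trmxK mulmxA. Qed.

Lemma dot_delta (R : realFieldType) m (q : 'cV[R]_m) j :
  dotv q (delta_mx j 0) = q j 0.
Proof. by rewrite dotE -colE !mxE. Qed.

Lemma dot_delta' (R : realFieldType) m (q : 'cV[R]_m) j :
  dotv (delta_mx j 0) q = q j 0.
Proof.
rewrite /dotv (bigD1 j) //= big1 ?addr0.
  by rewrite mxE !eqxx mul1r.
by move=> i /negbTE ij; rewrite mxE ij mul0r.
Qed.

Lemma maxnorm_lt (R : realFieldType) n (v : 'cV[R]_n) eps :
  0 < eps -> (forall i, `|v i 0| < eps) -> maxnorm v < eps.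
Proof.
move=> e0 H; rewrite /maxnorm; elim/big_ind: _ => //.
by move=> a b Ha Hb; rewrite gt_max Ha Hb.
Qed.

Lemma nonzero_entry (R : realFieldType) m (q : 'cV[R]_m) :
  q != 0 -> exists j, q j 0 != 0.
Proof.
move=> qn0; case: (boolP [exists j, q j 0 != 0]) => [/existsP//|/existsPn H].
case/negP: qn0; apply/eqP/matrixP => i k; rewrite (ord1 k) mxE.
by move: (H i); rewrite negbK => /eqP.
Qed.

Lemma dotDZ (R : realFieldType) n (h a b : 'cV[R]_n) c :
  dotv h (a + c *: b) = dotv h a + c * dotv h b.
Proof.
rewrite /dotv mulr_sumr -big_split; apply: eq_bigr => i _; rewrite !mxE.
by rewrite mulrDr mulrCA.
Qed.

Theorem proposition3 (R : realFieldType) (n m : nat) (Rm : 'M[R]_(n, m))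
  (X : 'cV[R]_n -> Prop) (f : 'cV[R]_n -> 'cV[R]_n) (J : 'cV[R]_n -> 'M[R]_n) :
  proper_cone (cone_of Rm) ->
  is_jacobian X f J ->
  (forall x, X x -> exists (alpha : R) (P : 'M[R]_m),
      (forall i j, 0 < P i j) /\ (alpha%:M + J x) *m Rm = Rm *m P) ->
  strictly_K_cooperative (cone_of Rm) X J.
Proof.
move=> [_ [r [eps eps0 Hball]] _] _ HP x Xx dx h [p p0 ->] dxn0 Hd hn0 hdx.
have [alpha [P [Ppos HPe]]] := HP x Xx.
set q := Rm^T *m h.
have q0 : forall j, 0 <= q j 0.
  move=> j; rewrite -dot_delta -dotRm; apply: Hd; exists (delta_mx j 0) => //.
  by move=> i; rewrite mxE; case: (_ && _).
have pn0 : p != 0 by apply: contraNneq dxn0 => ->; rewrite mulmx0.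
have qn0 : q != 0.
  apply/eqP => qz; case/negP: hn0; apply/eqP/matrixP => i k.
  rewrite (ord1 k) [RHS]mxE.
  have Hz : forall y, cone_of Rm y -> dotv h y = 0.
    by move=> y [py _ ->]; rewrite dotRm -/q qz /dotv big1 // => j _; rewrite mxE mul0r.
  have e2 : 0 < eps / 2 by rewrite divr_gt0.
  have Hy : cone_of Rm (r + (eps / 2) *: delta_mx i 0).
    apply: Hball; rewrite (addrC r) addrK; apply: maxnorm_lt => // j.
    rewrite !mxE; case: (_ && _); rewrite /= ?mulr1 ?mulr0 ?normr0 //.
    by rewrite gtr0_norm // ltr_pdivrMr // ltr_pMr // ltr1n.
  have Hr : cone_of Rm r by apply: Hball; rewrite subrr; apply: maxnorm_lt => // j; rewrite mxE normr0.
  move: (Hz _ Hy); rewrite dotDZ Hz // add0r dot_delta => /eqP.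
  by rewrite mulf_eq0 gt_eqF //= => /eqP.
have [j qj] := @nonzero_entry _ _ _ qn0.
have [k pk] := @nonzero_entry _ _ _ pn0.
have qjp : 0 < q j 0 by rewrite lt_def qj q0.
have pkp : 0 < p k 0 by rewrite lt_def pk p0.
have HJ : J x *m Rm = Rm *m P - alpha *: Rm.
  by rewrite -HPe mulmxDl mul_scalar_mx addrAC subrr add0r.
rewrite mulmxA HJ mulmxBl -scalemxAl -scaleNr dotDZ hdx mulr0 addr0 -mulmxA dotRm -/q /dotv.
have Pp : forall i, 0 <= (P *m p) i 0.
  move=> i; rewrite mxE sumr_ge0 // => l _; rewrite mulr_ge0 ?p0 // ltW //.
have Ppj : 0 < (P *m p) j 0.
  rewrite mxE (bigD1 k) //=.
  have : 0 <= \sum_(l < m | l != k) P j l * p l 0.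
    by rewrite sumr_ge0 // => l _; rewrite mulr_ge0 ?p0 // ltW.
  have : 0 < P j k * p k 0 by rewrite mulr_gt0.
  lra.
rewrite (bigD1 j) //=.
have : 0 <= \sum_(l < m | l != j) q l 0 * (P *m p) l 0.
  by rewrite sumr_ge0 // => l _; rewrite mulr_ge0.
have : 0 < q j 0 * (P *m p) j 0 by rewrite mulr_gt0.
lra.
Qed.
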